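(* Let $1\le r\le m\le n$ and $k\ge 1$. Let $Z_1\subseteq\mathcal Z^{m,n}_{r,k}$ be the closed subvariety of points at which all $x^{(0)}_{i,j}$ ($1\le i\le m$, $1\le j\le n$) vanish. If $k\le r$, then $Z_1$ is exactly the linear subspace $\{x^{(0)}_{i,j}=0 \ \forall i,j\}\cong\mathbf A^{mn(k-1)}$ (the coordinates of degrees $1,\dots,k-1$ being arbitrary). If $k>r$, then $Z_1\cong \mathcal Z^{m,n}_{r,k-r}\times\mathbf A^{mn(r-1)}$, via the map sending a point of $Z_1$ to the pair consisting of its coordinates $x^{(l)}_{i,j}$ with $1\le l\le k-r$ (regarded as the coordinates $x^{(l-1)}_{i,j}$ of a point of $\mathcal Z^{m,n}_{r,k-r}$) and its coordinates $x^{(l)}_{i,j}$ with $k-r<l\le k-1$.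
   Context: Let $F$ be an algebraically closed field. For integers $1\le r\le m\le n$ and $k\ge 1$, let $S=F[x^{(l)}_{i,j}:1\le i\le m,\ 1\le j\le n,\ 0\le l\le k-1]$, the coordinate ring of $\mathbf A^{mnk}_F$, and let $X(t)$ be the $m\times n$ matrix over $S[t]/(t^k)$ with $(i,j)$ entry $x_{i,j}(t)=\sum_{l=0}^{k-1}x^{(l)}_{i,j}t^l$. Every element of $S[t]/(t^k)$ is uniquely $\sum_{l=0}^{k-1}c_lt^l$ with $c_l\in S$ (its coefficient of $t^l$). $\mathcal I^{m,n}_{r,k}\subseteq S$ is the ideal generated by the coefficients of $t^l$, $0\le l\le k-1$, of all $r\times r$ minors of $X(t)$, and $\mathcal Z^{m,n}_{r,k}\subseteq\mathbf A^{mnk}_F$ is its zero set. The variable $x^{(l)}_{i,j}$ is said to have degree $l$. *)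

(* Defs.v *)
From HB Require Import structures.
From mathcomp Require Import all_boot all_order all_algebra.
Set Implicit Arguments. Unset Strict Implicit. Unset Printing Implicit Defensive.
Import GRing.Theory.
Local Open Scope ring_scope.

(* A point of A^{mnk}_F is x : 'I_k -> 'M[F]_(m,n), with x l i j = x^{(l)}_{i,j}. *)

Definition Xpoly (F : fieldType) (m n k : nat) (x : 'I_k -> 'M[F]_(m,n))
  : 'M[{poly F}]_(m,n) :=
  \matrix_(i < m, j < n) \sum_(l < k) (x l i j) *: 'X^l.

(* x lies in Z^{m,n}_{r,k}: for every r x r minor of X(t) (rows f, columns g),
   the coefficients of t^l, l < k, vanish (i.e. the minor is 0 in F[t]/(t^k)). *)
Definition inZ (F : fieldType) (m n r k : nat) (x : 'I_k -> 'M[F]_(m,n)) : Prop :=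
  forall (f : 'I_r -> 'I_m) (g : 'I_r -> 'I_n) (l : nat), (l < k)%N ->
    (\det (mxsub f g (Xpoly x)))`_l = 0.

Definition deg0_zero (F : fieldType) (m n k : nat) (x : 'I_k -> 'M[F]_(m,n)) : Prop :=
  forall l : 'I_k, nat_of_ord l = 0%N -> x l = 0.

Definition inZ1 (F : fieldType) (m n r k : nat) (x : 'I_k -> 'M[F]_(m,n)) : Prop :=
  inZ r x /\ deg0_zero x.

Definition ext_pt (F : fieldType) (m n k : nat) (x : 'I_k -> 'M[F]_(m,n)) (l : nat)
  : 'M[F]_(m,n) :=
  if insub l is Some i then x i else 0.

Definition shift_pt (F : fieldType) (m n k r : nat) (x : 'I_k -> 'M[F]_(m,n))
  : 'I_(k - r) -> 'M[F]_(m,n) :=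
  fun l => ext_pt x (nat_of_ord l).+1.
Arguments shift_pt {F m n k} r x _.

(* Main.v *)
Require Import Defs.
From HB Require Import structures.
From mathcomp Require Import all_boot all_order all_algebra.
From mathcomp Require Import zify.
Local Open Scope ring_scope.
Import GRing.Theory.

Definition agree (F : fieldType) (N : nat) (p q : {poly F}) :=
  forall c, (c < N)%N -> p`_c = q`_c.
Arguments agree {F}.

Lemma agreeD (F : fieldType) (N : nat) (p p' q q' : {poly F}) :
  agree N p p' -> agree N q q' -> agree N (p + q) (p' + q').
Proof. by move=> hp hq c hc; rewrite !coefD hp ?hq. Qed.

Lemma agreeM (F : fieldType) (N : nat) (p p' q q' : {poly F}) :
  agree N p p' -> agree N q q' -> agree N (p * q) (p' * q').
Proof.
move=> hp hq c hc; rewrite !coefM; apply: eq_bigr => j _.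
have hj := ltn_ord j.
rewrite hp ?hq //; lia.
Qed.

Lemma agree_det (F : fieldType) (N : nat) r (A B : 'M[{poly F}]_r) :
  (forall i j, agree N (A i j) (B i j)) -> agree N (\det A) (\det B).
Proof.
move=> hAB; rewrite /determinant.
apply: (big_ind2 (agree N)).
- by move=> c hc.
- by move=> ? ? ? ?; apply: agreeD.
move=> s _; apply: agreeM; first by move=> c hc.
apply: (big_ind2 (agree N)).
- by move=> c hc.
- by move=> ? ? ? ?; apply: agreeM.
by move=> i _; apply: hAB.
Qed.

Lemma coef_sumX (F : fieldType) (N : nat) (a : nat -> F) c :
  (\sum_(l < N) a l *: 'X^l)`_c = if (c < N)%N then a c else 0.
Proof.
rewrite coef_sum.
under eq_bigr => l _ do rewrite coefZ coefXn.
case: ifP => hc.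
  rewrite (bigD1 (Ordinal hc)) //= eqxx mulr1 big1 ?addr0 // => l hl.
  case: eqP => [e|]; last by rewrite mulr0.
  by case/eqP: hl; apply: val_inj.
by rewrite big1 // => l _; case: eqP => [e|]; [move: (ltn_ord l); rewrite -e hc | rewrite mulr0].
Qed.

Lemma ext_ptE (F : fieldType) m n k (x : 'I_k -> 'M[F]_(m,n)) (l : 'I_k) :
  ext_pt x l = x l.
Proof. by rewrite /ext_pt valK. Qed.

Lemma Xsum_coef (F : fieldType) m n k (x : 'I_k -> 'M[F]_(m,n)) i j c :
  (\sum_(l < k) x l i j *: 'X^l)`_c = if (c < k)%N then ext_pt x c i j else 0.
Proof.
rewrite (eq_bigr (fun l : 'I_k => ext_pt x l i j *: 'X^l)); first exact: (coef_sumX _ k (fun l => ext_pt x l i j) c).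
by move=> l _; rewrite ext_ptE.
Qed.

Definition Ymx (F : fieldType) m n k (x : 'I_k -> 'M[F]_(m,n))
  : 'M[{poly F}]_(m,n) :=
  \matrix_(i < m, j < n) \sum_(l < k.-1) (ext_pt x l.+1 i j) *: 'X^l.
Arguments Ymx {F m n k}.

Lemma XY (F : fieldType) m n r k (x : 'I_k -> 'M[F]_(m,n)) (f : 'I_r -> 'I_m) (g : 'I_r -> 'I_n) :
  (1 <= k)%N -> deg0_zero x ->
  \det (mxsub f g (Xpoly x)) = 'X^r * \det (mxsub f g (Ymx x)).
Proof.
move=> hk h0; rewrite -detZ; congr (\det _); apply/matrixP => a b.
rewrite !mxE; apply/polyP => c.
rewrite coefXM Xsum_coef (coef_sumX _ _ (fun l => ext_pt x l.+1 (f a) (g b))).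
case: c => [|c] /=.
  rewrite hk /ext_pt; case: insubP => [u _ hu|_].
    by rewrite h0 ?mxE.
  by rewrite mxE.
have -> : (c.+1 < k)%N = (c < k.-1)%N by lia.
by [].
Qed.

Lemma Yshift (F : fieldType) m n r k (x : 'I_k -> 'M[F]_(m,n)) (f : 'I_r -> 'I_m) (g : 'I_r -> 'I_n) :
  (1 <= r)%N ->
  agree (k - r) (\det (mxsub f g (Xpoly (shift_pt r x)))) (\det (mxsub f g (Ymx x))).
Proof.
move=> hr; apply: agree_det => a b c hc.
rewrite !mxE /shift_pt (coef_sumX _ _ (fun l => ext_pt x l.+1 (f a) (g b))).
rewrite (coef_sumX _ _ (fun l => ext_pt x l.+1 (f a) (g b))) hc.
have -> : (c < k.-1)%N by lia.
by [].
Qed.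

Arguments XY {F m n r k x} f g.
Arguments Yshift {F m n r k x} f g.

Theorem lemma2p1 (F : closedFieldType) (m n r k : nat)
  (hr : (1 <= r)%N) (hrm : (r <= m)%N) (hmn : (m <= n)%N) (hk : (1 <= k)%N) :
  ((k <= r)%N ->
     forall x : 'I_k -> 'M[F]_(m, n), inZ1 r x <-> deg0_zero x) /\
  ((r < k)%N ->
     forall x : 'I_k -> 'M[F]_(m, n),
       inZ1 r x <-> (deg0_zero x /\ inZ r (shift_pt r x))).
Proof.
split.
  move=> hkr x; split; first by case.
  move=> h0; split => // f g l hl.
  rewrite (XY _ _ hk h0) coefXnM.
  have -> : (l < r)%N by lia.
  by [].
move=> hrk x; split.
  case=> hZ h0; split => // f g l hl.
  rewrite (Yshift _ _ hr _ hl).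
  have := hZ f g (l + r)%N; rewrite (XY _ _ hk h0) coefXnM.
  have -> : (l + r < r)%N = false by lia.
  rewrite addnK; apply; lia.
case=> h0 hZ; split => // f g l hl.
rewrite (XY _ _ hk h0) coefXnM.
case: ifP => // hlr.
rewrite -(Yshift _ _ hr); first by apply: hZ; lia.
lia.
Qed.
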